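(* For every $v\in\mathbb Q$, the following are equivalent: (1) $v\in\mathcal V$; (2) $v\in\mathbb Z_{d,\ell}$, $v\geq-\mu_\kappa$, and $v\in\mathcal V_{\iota(v)}$ where $\iota(v)=\left\lfloor (n+1)\frac{v+\mu_\kappa}{\tau}+h(v)\right\rfloor$.
   Context: Let $\mathbf K$ be a field and $\ell\geq 2$ an integer. Let $L=a_n\phi_\ell^n+\dots+a_0$ with $n\geq1$, $a_i\in\mathbf K[z]$, $a_0a_n\neq0$, where $\phi_\ell(f)(z)=f(z^\ell)$ acting on Hahn series with coefficients in $\mathbf K$ and value group $\mathbb Q$. Let $\mathcal P(L)=\{(\ell^i,j): 0\le i\le n,\ j\in\operatorname{supp} a_i\}$. The Newton polygon of $L$ is the convex hull of $\{(\ell^i,j): 0\le i\le n,\ j\geq\operatorname{val} a_i\}\subset\mathbb R^2$; its non-vertical edges have slopes $\mu_1<\dots<\mu_\kappa$, $\mathcal S(L)=\{\mu_1,\dots,\mu_\kappa\}$. Let $d\geq1$ be a common multiple of the denominators of the $\mu_k$; $\mathbb Z_{d,\ell}=\bigcup_{i\geq0}\frac{1}{d\ell^i}\mathbb Z$, and $h(v)=\min\{i\geq0: v\in\frac1{d\ell^i}\mathbb Z\}$ for $v\in\mathbb Z_{d,\ell}$. Define $\Psi(v)=\{v\ell^i+j:(\ell^i,j)\in\mathcal P(L)\}$, $\pi(q)=\max\{(q-j)/\ell^i:(\ell^i,j)\in\mathcal P(L)\}$. Let $\mathcal V_0=-\mathcal S(L)$, $\mathcal V_{i+1}=\bigcup_{v\in\mathcal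 V_i}\pi(\Psi(v))$, $\mathcal V=\bigcup_{i\ge0}\mathcal V_i$ (a well-ordered set). For $v\in\mathbb Q$ let $\epsilon(v)=\min\{w\in\mathcal V: w>v\}-v\in\mathbb Q_{>0}\cup\{+\infty\}$ ($+\infty$ if this set is empty), and $\tau=\min\{\epsilon(-\mu_1),\dots,\epsilon(-\mu_\kappa),(d\ell^n)^{-1}\}\in\mathbb Q_{>0}$. *)

(* Defs.v *)
From HB Require Import structures.
From mathcomp Require Import all_boot all_order all_algebra.
Set Implicit Arguments. Unset Strict Implicit. Unset Printing Implicit Defensive.
Import Order.TTheory GRing.Theory Num.Theory.
Local Open Scope ring_scope.

Section Defs.
Variables (K : fieldType) (l n : nat) (a : nat -> {poly K}).

(* valuation of a polynomial: index of its first nonzero coefficient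
   (only used for a_i <> 0) *)
Definition pval (p : {poly K}) : nat := find (fun c => c != 0) p.

(* (l^i, j) \in P(L), encoded by the pair (i, j) *)
Definition inP (i j : nat) : bool := (i <= n)%N && ((a i)`_j != 0).

Definition Pseq : seq (nat * nat) :=
  flatten [seq [seq (i, j) | j <- iota 0 (size (a i)) & (a i)`_j != 0] | i <- iota 0 n.+1].

(* pi(q) = max { (q - j) / l^i : (l^i, j) \in P(L) }.  The start value
   (q - val a_0) / l^0 is itself one of the terms since a_0 <> 0. *)
Definition piL (q : rat) : rat :=
  foldr (fun p m => Num.max m ((q - (p.2)%:R) / ((l ^ p.1)%N)%:R))
        (q - (pval (a 0))%:R) Pseq.

(* mu is the slope of a non-vertical edge of the Newton polygon, i.e. the
   lower convex hull of the points (l^m, val a_m) (a_m <> 0): the supporting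
   line of slope mu touches at least two of these points. *)
Definition isSlope (mu : rat) : Prop :=
  exists i k : nat, [/\ (i < k)%N, (k <= n)%N, a i != 0 /\ a k != 0,
    (pval (a i))%:R - mu * ((l ^ i)%N)%:R = (pval (a k))%:R - mu * ((l ^ k)%N)%:R
    & forall m : nat, (m <= n)%N -> a m != 0 ->
        (pval (a i))%:R - mu * ((l ^ i)%N)%:R <= (pval (a m))%:R - mu * ((l ^ m)%N)%:R].

Definition isMaxSlope (mu : rat) : Prop :=
  isSlope mu /\ forall mu', isSlope mu' -> mu' <= mu.

Fixpoint inVi (i : nat) (w : rat) : Prop :=
  match i with
  | 0 => isSlope (- w)
  | i'.+1 => exists v : rat, inVi i' v /\
      exists e j : nat, inP e j /\ w = piL (v * ((l ^ e)%N)%:R + j%:R)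
  end.

Definition inV (w : rat) : Prop := exists i : nat, inVi i w.

Definition nextV (v w : rat) : Prop :=
  [/\ inV w, v < w & forall u, inV u -> v < u -> w <= u].

(* t = tau = min(eps(-mu_1), ..., eps(-mu_kappa), 1/(d l^n)), where
   eps(v) = nextV v - v, or +oo (dropped from the min) if no element of V
   exceeds v. *)
Definition isTau (d : nat) (t : rat) : Prop :=
  [/\ t <= (((d * l ^ n)%N)%:R)^-1,
      (forall mu w, isSlope mu -> nextV (- mu) w -> t <= w + mu) &
      (t = (((d * l ^ n)%N)%:R)^-1 \/
       exists mu w, [/\ isSlope mu, nextV (- mu) w & t = w + mu])].

End Defs.

Definition inZi (d l i : nat) (v : rat) : bool :=
  (v * ((d * l ^ i)%N)%:R) \is a Num.int.

Definition inZdl (d l : nat) (v : rat) : Prop := exists i : nat, inZi d l i v.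

Definition isH (d l : nat) (v : rat) (h : nat) : Prop :=
  inZi d l h v /\ forall i : nat, (i < h)%N -> ~~ inZi d l i v.

(* Main.v *)
Require Import Defs.
From HB Require Import structures.
From mathcomp Require Import all_boot all_order all_algebra.
From mathcomp Require Import ring lra zify.
From Stdlib Require Import Classical ClassicalEpsilon.
Import Order.TTheory GRing.Theory Num.Theory.
Set Implicit Arguments. Unset Strict Implicit. Unset Printing Implicit Defensive.
Local Open Scope ring_scope.

Section FoldMax.
Variables (X : eqType) (g : X -> rat) (b : rat).
Let fm s := foldr (fun p m => Num.max m (g p)) b s.

Lemma fm_ge_b s : b <= fm s.
Proof. elim: s => [|x s IH] /=; first exact: lexx. by rewrite le_max IH. Qed.

Lemma fm_ge_mem s x : x \in s -> g x <= fm s.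
Proof.
elim: s => [|y s IH] //=; rewrite inE => /orP [/eqP ->|/IH H]; rewrite le_max.
  by rewrite lexx orbT.
by rewrite H.
Qed.

Lemma fm_le s y : b <= y -> (forall x, x \in s -> g x <= y) -> fm s <= y.
Proof.
move=> hb; elim: s => [|x s IH] hs //=.
rewrite ge_max IH ?hs ?mem_head // => z hz.
by rewrite hs // inE hz orbT.
Qed.

Lemma fm_att s : fm s = b \/ exists2 x, x \in s & fm s = g x.
Proof.
elim: s => [|x s IH] /=; first by left.
have [h|h] := leP (fm s) (g x).
  by right; exists x; rewrite ?mem_head.
case: IH => [->|[y hy ->]]; first by left.
by right; exists y => //; rewrite inE hy orbT.
Qed.
End FoldMax.

Lemma seq_argmin (X : eqType) (g : X -> rat) (s : seq X) x0 :
  x0 \in s -> exists2 x, x \in s & forall y, y \in s -> g x <= g y.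
Proof.
elim: s x0 => [|z s IH] x0 //= _.
case hs: (s == [::]).
  move/eqP: hs => ->; exists z; first exact: mem_head.
  by move=> y; rewrite inE => /eqP ->.
have [x1 hx1] : exists x1, x1 \in s.
  by case: s hs IH => // w s' _ _; exists w; exact: mem_head.
case: (IH x1 hx1) => x hx hmin.
have [h|h] := leP (g z) (g x).
  exists z; first exact: mem_head.
  move=> y; rewrite inE => /orP [/eqP ->|hy]; first exact: lexx.
  exact: le_trans h (hmin y hy).
exists x; first by rewrite inE hx orbT.
move=> y; rewrite inE => /orP [/eqP ->|hy]; first exact: ltW.
exact: hmin.
Qed.

Lemma nat_min (P : nat -> Prop) : (exists r, P r) -> exists r, P r /\ forall r', P r' -> (r <= r')%N.
Proof.
move=> [r0 H0].
elim: r0 {-2}r0 (leqnn r0) H0 => [|N IHN] r0 hr Hr.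
  exists r0; split => // r' _; move: hr; rewrite leqn0 => /eqP ->; done.
case: (classic (exists r', P r' /\ (r' < r0)%N)) => [[r' [Pr' lt]]|nex].
  apply: (IHN r') => //; lia.
exists r0; split => // r' Pr'; rewrite leqNgt; apply/negP => lt.
by apply: nex; exists r'.
Qed.

Lemma pigeon (I : nat -> Prop) (f : nat -> nat) B :
  (forall K, exists k, (K <= k)%N /\ I k) -> (forall k, I k -> (f k < B)%N) ->
  exists b, forall K, exists k, (K <= k)%N /\ I k /\ f k = b.
Proof.
elim: B I => [|B IH] I hinf hb.
  by case: (hinf 0%N) => k [_ /hb].
case: (classic (forall K, exists k, (K <= k)%N /\ I k /\ f k = B)) => [h|h].
  by exists B.
have [K0 hK0] : exists K0, forall k, (K0 <= k)%N -> I k -> f k <> B.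
  apply: NNPP => nh; apply: h => K.
  apply: NNPP => nk; apply: nh; exists K => k hk Ik fk; apply: nk; by exists k.
have h1 : forall K, exists k, (K <= k)%N /\ (I k /\ (K0 <= k)%N).
  move=> K; case: (hinf (maxn K K0)) => k [hk Ik]; exists k.
  split; first lia. split => //; lia.
have h2 : forall k, I k /\ (K0 <= k)%N -> (f k < B)%N.
  move=> k [Ik hk]; have := hb k Ik; have := hK0 k hk Ik; lia.
have [b' hb'] := IH _ h1 h2.
exists b' => K; case: (hb' K) => k [hk [[Ik _] fk]]; by exists k.
Qed.
Section LrS.
Variable l : nat.
Hypothesis hl : (2 <= l)%N.
Definition Lr (i : nat) : rat := ((l ^ i)%N)%:R.

Lemma Lr_gt0 i : 0 < Lr i.
Proof. rewrite /Lr ltr0n expn_gt0; apply/orP; left; lia. Qed.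

Lemma Lr0 : Lr 0 = 1.
Proof. by rewrite /Lr expn0. Qed.

Lemma Lr_le i k : (i <= k)%N -> Lr i <= Lr k.
Proof. move=> h; rewrite /Lr ler_nat leq_exp2l //; lia. Qed.

Lemma Lr_lt2 i k : (i < k)%N -> 2 * Lr i <= Lr k.
Proof.
move=> h; rewrite /Lr -natrM ler_nat.
have -> : (l ^ k = l ^ i * l ^ (k - i))%N by rewrite -expnD subnKC //; lia.
rewrite mulnC leq_mul2l; apply/orP; right.
have : (l ^ 1 <= l ^ (k - i))%N by rewrite leq_exp2l //; lia.
rewrite expn1; lia.
Qed.

End LrS.

Section Basics.
Variables (K : fieldType) (l n : nat) (a : nat -> {poly K}).
Hypothesis hl : (2 <= l)%N.
Hypothesis ha0 : a 0%N != 0.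
Local Notation Lr := (Lr l).
Definition Tm (e j : nat) (v : rat) : rat := piL l n a (v * Lr e + j%:R).

Lemma mem_Pseq i j : ((i, j) \in Pseq n a) = inP n a i j.
Proof.
rewrite /Pseq /inP; apply/flattenP/andP => [[s /mapP [i' Hi' ->]]|[Hi Hj]].
  case/mapP => j'; rewrite mem_filter => /andP [Hj' _] [-> ->].
  by rewrite mem_iota in Hi'; split => //; lia.
exists [seq (i, j0) | j0 <- iota 0 (size (a i)) & (a i)`_j0 != 0].
  by apply/mapP; exists i => //; rewrite mem_iota; lia.
apply/mapP; exists j => //; rewrite mem_filter Hj mem_iota /=.
rewrite add0n ltnNge; apply/negP => hs. move: Hj. rewrite nth_default //. by rewrite eqxx.
Qed.

Lemma pval_coef (p : {poly K}) : p != 0 -> p`_(pval p) != 0.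
Proof.
move=> p0; rewrite /pval.
have : has (fun c => c != 0) p.
  apply/hasP; exists (lead_coef p); last by rewrite lead_coef_eq0.
  by rewrite lead_coefE mem_nth // ltn_predL size_poly_gt0.
by move/(nth_find 0).
Qed.

Lemma pval_le (p : {poly K}) j : p`_j != 0 -> (pval p <= j)%N.
Proof.
move=> hj; rewrite leqNgt; apply/negP => /(before_find 0) /=.
by rewrite /= hj.
Qed.

Lemma inP_nz e j : inP n a e j -> a e != 0.
Proof. case/andP => _; apply: contra => /eqP ->; by rewrite coef0. Qed.

Lemma inP_size e j : inP n a e j -> (j < size (a e))%N.
Proof.
case/andP => _ hj; rewrite ltnNge; apply/negP => hs; move: hj.
by rewrite nth_default // eqxx.
Qed.

Lemma inP_le e j : inP n a e j -> (e <= n)%N.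
Proof. by case/andP. Qed.

Lemma inP_pval e : (e <= n)%N -> a e != 0 -> inP n a e (pval (a e)).
Proof. move=> h1 h2; rewrite /inP h1 /=; exact: pval_coef. Qed.

Lemma inP_pval_le e j : inP n a e j -> (pval (a e) <= j)%N.
Proof. case/andP => _; exact: pval_le. Qed.

Lemma inP0 : inP n a 0 (pval (a 0%N)).
Proof. exact: inP_pval. Qed.

Let Fq (q : rat) (p : nat * nat) : rat := (q - (p.2)%:R) / Lr p.1.

Lemma piLE q : piL l n a q =
  foldr (fun p m => Num.max m (Fq q p)) (Fq q (0%N, pval (a 0%N))) (Pseq n a).
Proof. by rewrite /piL /Fq /= Lr0 divr1. Qed.

Lemma piL_ge q i j : inP n a i j -> (q - j%:R) / Lr i <= piL l n a q.
Proof. by rewrite piLE -mem_Pseq => h; exact: (fm_ge_mem (Fq q) _ h). Qed.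

Lemma piL_le q y : (forall i j, inP n a i j -> (q - j%:R) / Lr i <= y) -> piL l n a q <= y.
Proof.
move=> h; rewrite piLE; apply: fm_le; first exact: h _ _ inP0.
by case=> i j; rewrite mem_Pseq => /h.
Qed.

Lemma piL_att q : exists e j, inP n a e j /\ piL l n a q = (q - j%:R) / Lr e.
Proof.
rewrite piLE; case: (fm_att (Fq q) (Fq q (0%N, pval (a 0%N))) (Pseq n a)) => [->|[[e j] h ->]].
  by exists 0%N, (pval (a 0%N)); split => //; exact: inP0.
by exists e, j; rewrite -mem_Pseq.
Qed.

Lemma piL_mono q q' : q <= q' -> piL l n a q <= piL l n a q'.
Proof.
move=> hq; apply: piL_le => i j hij; apply: (le_trans _ (piL_ge q' hij)).
by rewrite ler_pM2r ?invr_gt0 ?(Lr_gt0 hl) // lerD2r.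
Qed.

Lemma Tm_ge e j v : inP n a e j -> v <= Tm e j v.
Proof.
move=> h; have := piL_ge (v * Lr e + j%:R) h.
by rewrite addrK mulfK // gt_eqF ?(Lr_gt0 hl).
Qed.

Lemma Tm_mono e j v v' : v <= v' -> Tm e j v <= Tm e j v'.
Proof.
move=> h; apply: piL_mono; rewrite lerD2r ler_pM2r ?(Lr_gt0 hl) //.
Qed.

Lemma Tm_fix v : exists e j, inP n a e j /\ Tm e j v = v.
Proof.
have hP0 : (0%N, pval (a 0%N)) \in Pseq n a by rewrite mem_Pseq; exact: inP0.
have [[e j] hm hmin] := seq_argmin (fun p : nat * nat => v * Lr p.1 + (p.2)%:R) hP0.
rewrite mem_Pseq in hm; exists e, j; split => //.
apply/le_anti/andP; split; last exact: Tm_ge.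
apply: piL_le => i k hik.
rewrite ler_pdivrMr ?(Lr_gt0 hl) // lerBlDr.
by have := hmin (i, k); rewrite mem_Pseq => /(_ hik).
Qed.

Lemma inVi_S k v : inVi l n a k v -> inVi l n a k.+1 v.
Proof.
move=> h; have [e [j [hej hT]]] := Tm_fix v.
by exists v; split => //; exists e, j; split => //; rewrite -[LHS]hT.
Qed.

Lemma inVi_mono k k' v : (k <= k')%N -> inVi l n a k v -> inVi l n a k' v.
Proof.
move=> h hv; elim: k' h => [|k' IH] h.
  by move: h; rewrite leqn0 => /eqP hk; rewrite -hk.
case: (eqVneq k k'.+1) => [<-|hne] //.
apply: inVi_S; apply: IH; move: h hne; lia.
Qed.

End Basics.

Section Grid.
Variables (d l : nat).
Hypothesis hl0 : (0 < l)%N.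
Hypothesis hd0 : (0 < d)%N.

Lemma inZi_mono i i' v : (i <= i')%N -> inZi d l i v -> inZi d l i' v.
Proof.
move=> h; rewrite /inZi.
have -> : (d * l ^ i' = (d * l ^ i) * l ^ (i' - i))%N by rewrite -mulnA -expnD subnKC.
by move=> hv; rewrite natrM mulrA rpredM // rpred_nat.
Qed.

Lemma inZi_addn i v c : inZi d l i v -> inZi d l i (v + c%:R).
Proof. by rewrite /inZi mulrDl => hv; rewrite rpredD // -natrM rpred_nat. Qed.

Lemma inZi_subn i v c : inZi d l i v -> inZi d l i (v - c%:R).
Proof. by rewrite /inZi mulrBl => hv; rewrite rpredB // -natrM rpred_nat. Qed.

Lemma inZi_sub i v w : inZi d l i v -> inZi d l i w -> inZi d l i (w - v).
Proof. by rewrite /inZi mulrBl => hv hw; rewrite rpredB. Qed.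

Lemma inZi_mulL i m v : inZi d l i (v * Lr l m) -> inZi d l (i + m) v.
Proof.
rewrite /inZi /Lr.
have -> : v * (d * l ^ (i + m))%N%:R = v * (l ^ m)%N%:R * (d * l ^ i)%N%:R.
  by rewrite expnD !natrM; ring.
done.
Qed.

Lemma inZi_mulR i m v : inZi d l i v -> inZi d l (i - m) (v * Lr l m).
Proof.
rewrite /inZi /Lr => hv.
case: (leqP m i) => hm.
  have -> : v * (l ^ m)%N%:R * (d * l ^ (i - m))%N%:R = v * (d * l ^ i)%N%:R.
    have -> : (l ^ i = l ^ (i - m) * l ^ m)%N by rewrite -expnD subnK.
    by rewrite !natrM; ring.
  done.
have -> : (i - m = 0)%N by lia.
have -> : v * (l ^ m)%N%:R * (d * l ^ 0)%N%:R = v * (d * l ^ i)%N%:R * (l ^ (m - i))%N%:R.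
  have -> : (l ^ m = l ^ i * l ^ (m - i))%N by rewrite -expnD subnKC //; lia.
  by rewrite !natrM expn0; ring.
by rewrite rpredM // rpred_nat.
Qed.

Lemma inZi_div i m v : inZi d l i v -> inZi d l (i + m) (v / Lr l m).
Proof.
move=> hv; apply: inZi_mulL.
by rewrite divfK // /Lr pnatr_eq0 -lt0n expn_gt0 hl0.
Qed.

Lemma inZi_pos i v : inZi d l i v -> 0 < v -> ((d * l ^ i)%N%:R)^-1 <= v.
Proof.
move=> hv vp.
have Np : 0 < ((d * l ^ i)%N%:R : rat) by rewrite ltr0n muln_gt0 hd0 expn_gt0 hl0.
rewrite -div1r ler_pdivrMr //.
have nz : v * ((d * l ^ i)%N%:R : rat) != 0 by rewrite mulf_neq0 // gt_eqF.
have := norm_intr_ge1 hv nz.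
by rewrite ger0_norm // mulr_ge0 // ltW.
Qed.

Lemma isH_ex v : inZdl d l v -> exists h, isH d l v h.
Proof.
move=> hex; have hex' : exists i, inZi d l i v by [].
case: (ex_minnP hex') => h hh hmin; exists h; split => // i hi.
apply/negP => /hmin; lia.
Qed.

Lemma isH_min v h i : isH d l v h -> inZi d l i v -> (h <= i)%N.
Proof. by case=> _ hm hi; rewrite leqNgt; apply/negP => /hm; rewrite hi. Qed.

Lemma isH_uniq v h h' : isH d l v h -> isH d l v h' -> h = h'.
Proof.
move=> H H'; apply/eqP; rewrite eqn_leq (isH_min H (proj1 H')).
by rewrite (isH_min H' (proj1 H)).
Qed.

End Grid.

Section Main.
Variables (K : fieldType) (l n : nat) (a : nat -> {poly K}) (d : nat).
Hypothesis hl : (2 <= l)%N.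
Hypothesis hn : (1 <= n)%N.
Hypothesis ha0 : a 0%N != 0.
Hypothesis han : a n != 0.
Hypothesis hd : (1 <= d)%N.
Hypothesis hden : forall mu : rat, isSlope l n a mu -> (denq mu %| d%:Z)%Z.
Variable muk : rat.
Hypothesis hmuk : isMaxSlope l n a muk.
Variable tau : rat.
Hypothesis htau : isTau l n a d tau.

Let hl0 : (0 < l)%N. Proof. lia. Qed.
Let hd0 : (0 < d)%N. Proof. lia. Qed.

Lemma slope_grid mu : isSlope l n a mu -> inZi d l 0 (- mu).
Proof.
move=> H; case/dvdzP: (hden H) => k hk.
rewrite /inZi expn0 muln1; apply/intrP; exists (- (k * numq mu)).
rewrite intrN intrM numqE.
have -> : (d%:R : rat) = (d%:Z)%:~R by [].
by rewrite hk intrM; ring.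
Qed.

Lemma Vi_ge k v : inVi l n a k v -> - muk <= v.
Proof.
elim: k v => [|k IH] v /=.
  by move=> H; have := proj2 hmuk _ H; rewrite lerNl.
case=> v' [hv' [e [j [hej ->]]]].
exact: le_trans (IH _ hv') (Tm_ge hl ha0 v' hej).
Qed.

Lemma V_ge v : inV l n a v -> - muk <= v.
Proof. by case=> k; exact: Vi_ge. Qed.

Lemma Vi_grid k v : inVi l n a k v -> inZdl d l v.
Proof.
elim: k v => [|k IH] v /=.
  by move=> H; exists 0%N; have := slope_grid H; rewrite opprK.
case=> v' [hv' [e [j [hej ->]]]].
case: (IH _ hv') => i hi.
have [e' [j' [hej' ->]]] := piL_att n hl ha0 (v' * ((l ^ e)%N)%:R + j%:R).
exists (i + e')%N; apply: inZi_div => //; apply: inZi_subn; apply: inZi_addn.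
have := @inZi_mulR d l hl0 hd0 i e v' hi.
move/(@inZi_mono d l (i - e) i); apply; lia.
Qed.

Lemma V_grid v : inV l n a v -> inZdl d l v.
Proof. by case=> k; exact: Vi_grid. Qed.

Lemma tau_pos : 0 < tau.
Proof.
case: htau => _ _ [->|[mu [w [_ [_ hw _] ->]]]].
  by rewrite invr_gt0 ltr0n muln_gt0 hd0 expn_gt0 hl0.
lra.
Qed.

Lemma Lr_diff_pos i k : (i < k)%N -> 0 < Lr l k - Lr l i.
Proof. move=> h; have := Lr_lt2 hl h; have := Lr_gt0 hl i; lra. Qed.

Lemma slope_next w e j e' j' :
  inP n a e j -> inP n a e' j' -> (e' < e)%N ->
  (forall i k, inP n a i k -> w * Lr l e' + j'%:R <= w * Lr l i + k%:R) ->
  exists s, [/\ isSlope l n a s, - s <= w & s * (Lr l e - Lr l e') <= j%:R - j'%:R].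
Proof.
move=> hej he'j' hlt hsup.
have hj' : j' = pval (a e').
  apply/eqP; rewrite eqn_leq (inP_pval_le he'j') andbT.
  have := hsup _ _ (inP_pval (inP_le he'j') (inP_nz he'j')).
  by rewrite lerD2l ler_nat.
pose pv m : rat := (pval (a m))%:R.
pose ratio m := (pv m - pv e') / (Lr l m - Lr l e').
pose S := [seq m <- iota e'.+1 (n - e') | a m != 0].
have hen := inP_le hej.
have heS : e \in S.
  rewrite mem_filter mem_iota (inP_nz hej) /=; apply/andP; split; lia.
have [m0 hm0 hmin] := seq_argmin ratio heS.
have hmS m : (e' < m)%N -> (m <= n)%N -> a m != 0 -> m \in S.
  move=> h1 h2 h3; rewrite mem_filter mem_iota h3 /=; apply/andP; split; lia.
move: hm0; rewrite mem_filter mem_iota => /andP [hm0a /andP [hm0l hm0r]].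
have hm0n : (m0 <= n)%N by lia.
have hm0lt : (e' < m0)%N by lia.
have hsupm m : (m <= n)%N -> a m != 0 -> w * Lr l e' + pv e' <= w * Lr l m + pv m.
  move=> h1 h2; rewrite /pv -hj'; exact: hsup _ _ (inP_pval h1 h2).
have hD0 := Lr_diff_pos hm0lt.
have hrw : - w <= ratio m0.
  rewrite /ratio ler_pdivlMr //; have := hsupm m0 hm0n hm0a; lra.
exists (ratio m0); split => //; last first.
- have := hmin e heS; rewrite {2}/ratio ler_pdivlMr ?Lr_diff_pos //.
  have := inP_pval_le hej; rewrite -(ler_nat rat) => hpj.
  rewrite hj' /pv; lra.
- lra.
exists e', m0; split => //.
- by split => //; exact: inP_nz he'j'.
- have : pv e' - ratio m0 * Lr l e' = pv m0 - ratio m0 * Lr l m0.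
    rewrite /ratio; field; by rewrite gt_eqF.
  done.
move=> m hm am.
have : pv e' - ratio m0 * Lr l e' <= pv m - ratio m0 * Lr l m; last done.
case: (ltngtP m e') => [hme|hme|->]; last exact: lexx.
- have hD := Lr_diff_pos hme.
  have := hsupm m hm am; move: hrw hD; set r := ratio m0; nra.
- have := hmin m (hmS m hme hm am); rewrite {2}/ratio ler_pdivlMr ?Lr_diff_pos //.
  lra.
Qed.

Definition Bad (x : rat) : Prop :=
  exists f : nat -> rat, f 0%N = x /\ forall k, inV l n a (f k) /\ f k.+1 < f k.

Lemma Bad_inV x : Bad x -> inV l n a x.
Proof. by case=> f [<- hf]; case: (hf 0%N). Qed.

Lemma Bad_next x : Bad x -> exists y, Bad y /\ y < x.
Proof.
case=> f [hf0 hf]; exists (f 1%N); split; last by rewrite -hf0; case: (hf 0%N).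
by exists (fun k => f k.+1); split => // k; exact: hf.
Qed.

Definition DSpec (ck ck1 : rat) (t : nat * nat * nat * nat * rat) : Prop :=
  [/\ inVi l n a t.1.1.1.1 ck1,
      (forall y' r', Bad y' -> y' < ck -> inVi l n a r' y' -> (t.1.1.1.1 <= r')%N) &
      (t.1.1.1.2 = 0%N /\ (t.1.1.2 < t.1.2)%N /\ (t.1.2 <= n)%N /\
        ck1 = - (((pval (a t.1.2))%:R - (pval (a t.1.1.2))%:R) / (Lr l t.1.2 - Lr l t.1.1.2)))
      \/ (t.1.1.1.2 = 1%N /\ (0 < t.1.1.1.1)%N /\ inP n a t.1.1.2 t.1.2 /\
          inVi l n a (t.1.1.1.1).-1 t.2 /\ ck1 = Tm l n a t.1.1.2 t.1.2 t.2)].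

Lemma no_bad x0 : ~ Bad x0.
Proof.
move=> hx0.
have hnext : forall c, exists y, Bad c -> [/\ Bad y, y < c &
    exists r, inVi l n a r y /\ forall y' r', Bad y' -> y' < c -> inVi l n a r' y' -> (r <= r')%N].
  move=> c; case: (classic (Bad c)) => hc; last by exists c.
  have hex : exists r, exists y, (Bad y /\ y < c) /\ inVi l n a r y.
    case: (Bad_next hc) => y [hy hyc]; case: (Bad_inV hy) => r hr.
    by exists r, y.
  case: (nat_min hex) => r [[y [[hy hyc] hr]] hmin].
  exists y => _; split => //; exists r; split => // y' r' hy' hy'c hr'.
  by apply: hmin; exists y'.
pose nxt c := proj1_sig (constructive_indefinite_description _ (hnext c)).
have hnxt c : Bad c -> [/\ Bad (nxt c), nxt c < c &
    exists r, inVi l n a r (nxt c) /\ forall y' r', Bad y' -> y' < c -> inVi l n a r' y' -> (r <= r')%N].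
  exact: (proj2_sig (constructive_indefinite_description _ (hnext c))).
pose c k := iter k nxt x0.
have cBad k : Bad (c k).
  elim: k => [|k IH] //=; by case: (hnxt _ IH).
have cdec k : c k.+1 < c k by case: (hnxt _ (cBad k)).
have cdec2 k k' : (k < k')%N -> c k' < c k.
  elim: k' => [|k' IH] // hk.
  case: (eqVneq k k') => [->|hne]; first exact: cdec.
  have hlt : (k < k')%N by move: hk hne; lia.
  exact: lt_trans (cdec k') (IH hlt).
have hdata k : exists t, DSpec (c k) (c k.+1) t.
  case: (hnxt _ (cBad k)) => _ _ [r [hr hmin]].
  case: r hr hmin => [|r] hr hmin.
    have hr0 := hr.
    case: hr => [i [k' [hik hk'n [hai hak] heq _]]].
    exists (0%N, 0%N, i, k', 0); split; [exact: hr0| by move=> * |left].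
    split => //; split => //; split => //.
    have hD := Lr_diff_pos hik.
    set mu := - c k.+1 in heq.
    have E : mu * (Lr l k' - Lr l i) = (pval (a k'))%:R - (pval (a i))%:R.
      move: heq; rewrite /Lr; lra.
    rewrite /= -E mulfK ?gt_eqF // /mu opprK //.
  have hr0 := hr.
  case: hr => [v [hv [e [j [hej hc]]]]].
  exists (r.+1, 1%N, e, j, v); split; [exact: hr0 | exact: hmin | right].
  by split => //; split => //; split => //; split => //.
pose dat k := proj1_sig (constructive_indefinite_description _ (hdata k)).
have hdat k : DSpec (c k) (c k.+1) (dat k).
  exact: (proj2_sig (constructive_indefinite_description _ (hdata k))).
pose rk k := (dat k).1.1.1.1.
pose tg k := (dat k).1.1.1.2.
pose p1 k := (dat k).1.1.2.
pose p2 k := (dat k).1.2.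
pose dv k := (dat k).2.
have tg01 k : tg k = 0%N \/ tg k = 1%N.
  by case: (hdat k) => _ _ [[h _]|[h _]]; rewrite /tg h; [left|right].
have [b0 hb0] := @pigeon (fun _ => True) tg 2 (fun K => ex_intro _ K (conj (leqnn K) I))
  (fun k _ => ltac:(by case: (tg01 k) => ->)).
have hb01 : b0 = 0%N \/ b0 = 1%N.
  case: (hb0 0%N) => k [_ [_ <-]]; exact: tg01.
case: hb01 => hb; subst b0.
-
  have [q1 hq1] := @pigeon (fun k => True /\ tg k = 0%N) p1 n.+1 (fun K => hb0 K)
    (fun k '(conj _ hk) => ltac:(case: (hdat k) => _ _ [[_ [h1 [h2 _]]]|[h _]];
       [rewrite /p1; lia | by move: hk; rewrite /tg h])).
  have [q2 hq2] := @pigeon (fun k => (True /\ tg k = 0%N) /\ p1 k = q1) p2 n.+1 (fun K => hq1 K)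
    (fun k '(conj (conj _ hk) _) => ltac:(case: (hdat k) => _ _ [[_ [h1 [h2 _]]]|[h _]];
       [rewrite /p2; lia | by move: hk; rewrite /tg h])).
  case: (hq2 0%N) => k1 [_ [[[_ hk1] hp1] hp2]].
  case: (hq2 k1.+1) => k2 [hk12 [[[_ hk2] hp1'] hp2']].
  have e1 : c k1.+1 = - (((pval (a q2))%:R - (pval (a q1))%:R) / (Lr l q2 - Lr l q1)).
    case: (hdat k1) => _ _ [[_ [_ [_ ->]]]|[h _]]; last by move: hk1; rewrite /tg h.
    by rewrite -hp1 -hp2.
  have e2 : c k2.+1 = - (((pval (a q2))%:R - (pval (a q1))%:R) / (Lr l q2 - Lr l q1)).
    case: (hdat k2) => _ _ [[_ [_ [_ ->]]]|[h _]]; last by move: hk2; rewrite /tg h.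
    by rewrite -hp1' -hp2'.
  have hlt12 : (k1.+1 < k2.+1)%N by rewrite ltnS.
  have := cdec2 _ _ hlt12.
  by rewrite e1 e2 ltxx.
- have [q1 hq1] := @pigeon (fun k => True /\ tg k = 1%N) p1 n.+1 (fun K => hb0 K)
    (fun k '(conj _ hk) => ltac:(case: (hdat k) => _ _ [[h _]|[_ [_ [h _]]]];
       [by move: hk; rewrite /tg h | rewrite /p1 ltnS; exact: inP_le h])).
  have [q2 hq2] := @pigeon (fun k => (True /\ tg k = 1%N) /\ p1 k = q1) p2 (size (a q1))
    (fun K => hq1 K)
    (fun k '(conj (conj _ hk) hq) => ltac:(case: (hdat k) => _ _ [[h _]|[_ [_ [h _]]]];
       [by move: hk; rewrite /tg h | rewrite /p2 -hq; exact: inP_size h])).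
  pose J k := ((True /\ tg k = 1%N) /\ p1 k = q1) /\ p2 k = q2.
  have hJ : forall K, exists k, (K <= k)%N /\ J k := hq2.
  have hJspec k : J k -> [/\ (0 < rk k)%N, inP n a q1 q2, inVi l n a (rk k).-1 (dv k)
       & c k.+1 = Tm l n a q1 q2 (dv k)].
    move=> [[[_ hk] hp1] hp2].
    case: (hdat k) => _ _ [[h _]|[_ [h0 [hP [hv hc]]]]]; first by move: hk; rewrite /tg h.
    by split => //; rewrite -hp1 -hp2.
  have hJmin k : J k -> forall y' r', Bad y' -> y' < c k -> inVi l n a r' y' -> (rk k <= r')%N.
    by move=> _; case: (hdat k).
  pose nJ K0 := proj1_sig (constructive_indefinite_description _ (hJ K0)).
  have hnJ K0 : (K0 <= nJ K0)%N /\ J (nJ K0).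
    exact: (proj2_sig (constructive_indefinite_description _ (hJ K0))).
  pose sg s := iter s (fun k => nJ k.+1) (nJ 0%N).
  have sgJ s : J (sg s).
    by case: s => [|s]; [exact: (proj2 (hnJ 0%N)) | exact: (proj2 (hnJ (sg s).+1))].
  have sgS s : (sg s < sg s.+1)%N by exact: (proj1 (hnJ (sg s).+1)).
  pose g s := dv (sg s).
  have gdec s : g s.+1 < g s.
    rewrite ltNge; apply/negP => hle.
    have [_ _ _ e1] := hJspec _ (sgJ s).
    have [_ _ _ e2] := hJspec _ (sgJ s.+1).
    have := Tm_mono n hl ha0 q1 q2 hle; rewrite -e1 -e2.
    have hlt : ((sg s).+1 < (sg s.+1).+1)%N by rewrite ltnS.
    by rewrite leNgt (cdec2 _ _ hlt).
  have gV s : inV l n a (g s).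
    by have [_ _ hv _] := hJspec _ (sgJ s); exists (rk (sg s)).-1.
  have gBad : Bad (g 0%N) by exists g; split => // k; split.
  have [hr0 hP0 hv0 hc0] := hJspec _ (sgJ 0%N).
  have hlt : g 0%N < c (sg 0%N).
    apply: le_lt_trans (cdec (sg 0%N)); rewrite hc0; exact: Tm_ge.
  have := hJmin _ (sgJ 0%N) _ _ gBad hlt hv0; lia.
Qed.

Lemma V_min (S : rat -> Prop) : (forall x, S x -> inV l n a x) -> (exists x, S x) ->
  exists m, S m /\ forall x, S x -> m <= x.
Proof.
move=> hSV [x0 hx0]; apply: NNPP => hno.
have hstep : forall m, exists y, S m -> S y /\ y < m.
  move=> m; case: (classic (S m)) => hm; last by exists m.
  apply: NNPP => nex; apply: hno; exists m; split => // x hx.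
  rewrite leNgt; apply/negP => hxm; apply: nex; by exists x.
pose nx m := proj1_sig (constructive_indefinite_description _ (hstep m)).
have hnx m : S m -> S (nx m) /\ nx m < m.
  exact: (proj2_sig (constructive_indefinite_description _ (hstep m))).
pose f k := iter k nx x0.
have fS k : S (f k) by elim: k => [|k IH] //=; case: (hnx _ IH).
apply: (@no_bad x0); exists f; split => // k; split; first exact: hSV.
by case: (hnx _ (fS k)).
Qed.

Lemma gap mu u : isSlope l n a mu -> inV l n a u -> - mu < u -> - mu + tau <= u.
Proof.
move=> hmu hu hlt.
have hS : exists x, (fun x => inV l n a x /\ - mu < x /\ x <= u) x.
  by exists u; split => //; split => //; exact: lexx.
have [m [[hmV [hmlt hmu']] hmin]] := V_min (fun x h => proj1 h) hS.
have hnext : nextV l n a (- mu) m.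
  split => // u' hu' hlt'.
  case: (leP u' u) => h; first by apply: hmin; split => //; split.
  exact: (le_trans hmu' (ltW h)).
case: htau => _ h2 _; have := h2 _ _ hmu hnext; lra.
Qed.

Lemma Tm_V v e j : inV l n a v -> inP n a e j -> inV l n a (Tm l n a e j v).
Proof. by case=> k hk hej; exists k.+1, v; split => //; exists e, j. Qed.

Lemma ar1 hv hw e e' m : (hv <= hw - e' + e)%N -> (hw <= hv)%N -> (m < hv)%N -> (e <= m)%N -> (e' <= e)%N.
Proof. lia. Qed.
Lemma ar2 hv hw e e' m : (hw <= 0)%N -> (hv <= hw - e' + e)%N -> (m < hv)%N -> (e <= m)%N -> False.
Proof. lia. Qed.
Lemma ar3 hv m : (hv <= 0)%N -> (m < hv)%N -> False.
Proof. lia. Qed.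
Lemma ar4 hv hw e e' m : (hv <= hw - e' + e)%N -> (e <= m)%N -> (hv <= hw + m)%N.
Proof. lia. Qed.

Lemma step v e j hv hw : inV l n a v -> inP n a e j -> v < Tm l n a e j v ->
  isH d l v hv -> isH d l (Tm l n a e j v) hw ->
  n.+1%:R * ((v + muk) / tau) + hv%:R + 1 <= n.+1%:R * ((Tm l n a e j v + muk) / tau) + hw%:R.
Proof.
move=> hvV hej hvw hhv hhw.
set w := Tm l n a e j v in hvw hhw *.
have hwV : inV l n a w := Tm_V hvV hej.
have [e' [j' [he'j' hwE]]] := piL_att n hl ha0 (v * Lr l e + j%:R).
have hwE' : w = (v * Lr l e + j%:R - j'%:R) / Lr l e' := hwE.
have hsup i k : inP n a i k -> (v * Lr l e + j%:R - k%:R) / Lr l i <= w.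
  by move=> hik; exact: piL_ge.
have hLe' := Lr_gt0 hl e'.
have hLe := Lr_gt0 hl e.
have hrel : w * Lr l e' + j'%:R = v * Lr l e + j%:R.
  by rewrite hwE' divfK ?gt_eqF // subrK.
have htp := tau_pos.
have hen := inP_le hej.
have he'n := inP_le he'j'.
have hvZ := proj1 hhv.
have hwZ := proj1 hhw.
have hrelh : (hv <= (hw - e') + e)%N.
  apply: (isH_min hhv).
  have h1 := @inZi_mulR d l hl0 hd0 hw e' w hwZ.
  have h3 := inZi_subn j (inZi_addn j' h1).
  have h4 := @inZi_div d l hl0 _ e _ h3.
  have E : (w * Lr l e' + j'%:R - j%:R) / Lr l e = v by rewrite hrel addrK mulfK ?gt_eqF.
  by rewrite E in h4.
have htD : tau <= ((d * l ^ n)%N%:R)^-1 by case: htau.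
have hDp : 0 < ((d * l ^ n)%N%:R : rat) by rewrite ltr0n muln_gt0 hd0 expn_gt0 hl0.
have htD' : tau * (d * l ^ n)%N%:R <= 1.
  by rewrite -ler_pdivlMr // div1r.
have key : (hv < hw)%N \/ tau <= w - v.
  case: (ltnP hv hw) => hge; [by left | right].
  case: (leqP hv n) => hvn.
    have hvZn := inZi_mono hvn hvZ.
    have hwZn := inZi_mono (leq_trans hge hvn) hwZ.
    have := @inZi_pos d l hl0 hd0 n (w - v) (inZi_sub hvZn hwZn).
    rewrite subr_gt0 => /(_ hvw) h; exact: le_trans htD h.
  have he'e : (e' <= e)%N := ar1 hrelh hge hvn hen.
  case: (ltngtP e' e) he'e => // [hlt|heq] _.
    have hsup' i k : inP n a i k -> w * Lr l e' + j'%:R <= w * Lr l i + k%:R.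
      move=> hik; have := hsup i k hik; rewrite ler_pdivrMr ?(Lr_gt0 hl) // hrel.
      lra.
    have [s [hs hsw hsj]] := slope_next hej he'j' hlt hsup'.
    have hxZ := slope_grid hs.
    have hLL : Lr l e' <= Lr l e - Lr l e' by have := Lr_lt2 hl hlt; lra.
    have keyi : (v + s) * (Lr l e - Lr l e') <= (w - v) * Lr l e'.
      move: hsj hrel; lra.
    case: (ltgtP v (- s)) => hvx.
    - have hwx : - s < w.
        rewrite lt_neqAle hsw andbT; apply/negP => /eqP hwx.
        have : (hw <= 0)%N by apply: (isH_min hhw); rewrite -hwx.
        move=> h0; case: (ar2 h0 hrelh hvn hen).
      have := gap hs hwV hwx; lra.
    - have hg := gap hs hvV hvx.
      have hvs : 0 <= v + s by move: hg htp; lra.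
      have k2 : (v + s) * Lr l e' <= (v + s) * (Lr l e - Lr l e') by rewrite ler_wpM2l.
      have k3 : v + s <= w - v.
        by rewrite -(ler_pM2r hLe'); exact: le_trans k2 keyi.
      lra.
    - have : (hv <= 0)%N by apply: (isH_min hhv); rewrite hvx.
      move=> h0; case: (ar3 h0 hvn).
  subst e'.
  have hE : (w - v) * Lr l e = j%:R - j'%:R by move: hrel; lra.
  have hpos : 0 < (w - v) * Lr l e by rewrite mulr_gt0 // subr_gt0.
  have hjj : (j' < j)%N by rewrite -(ltr_nat rat); move: hE hpos; lra.
  have hj1 : j'%:R + 1 <= (j%:R : rat) by rewrite natr1 ler_nat.
  have hLD : Lr l e <= (d * l ^ n)%N%:R.
    rewrite /Lr ler_nat; apply: (leq_trans (leq_pexp2l _ hen)) => //.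
    by rewrite leq_pmull.
  have k1 : tau * Lr l e <= tau * (d * l ^ n)%N%:R by rewrite ler_wpM2l // ltW.
  have k2 : tau * Lr l e <= (w - v) * Lr l e by move: k1 htD' hE hj1; lra.
  by rewrite -(ler_pM2r hLe).
have hdiff : (w + muk) / tau - (v + muk) / tau = (w - v) / tau.
  by field; rewrite gt_eqF.
have hnn : 0 <= (n%:R : rat) by rewrite ler0n.
set X := (v + muk) / tau in hdiff *.
set Y := (w + muk) / tau in hdiff *.
have hn1 : 0 <= (n.+1%:R : rat) by rewrite ler0n.
case: key => [hlt|hge].
  have h1 : (hv.+1%:R : rat) <= hw%:R by rewrite ler_nat.
  have h2 : 0 <= (w - v) / tau.
    by apply: divr_ge0; [rewrite subr_ge0; exact: ltW | exact: ltW].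
  have h3 : 0 <= n.+1%:R * (Y - X) by rewrite mulr_ge0 // hdiff.
  move: h1 h3; rewrite -natr1; lra.
have h1 : 1 <= (w - v) / tau by rewrite ler_pdivlMr // mul1r.
have h2 : (hv%:R : rat) <= hw%:R + n%:R by rewrite -natrD ler_nat; exact: ar4 hrelh hen.
have h3 : n.+1%:R * 1 <= n.+1%:R * (Y - X) by rewrite ler_wpM2l // hdiff.
move: h2 h3; rewrite -natr1; lra.
Qed.

Lemma chain r v h : inVi l n a r v -> isH d l v h ->
  exists m, inVi l n a m v /\ m%:R <= n.+1%:R * ((v + muk) / tau) + h%:R.
Proof.
have htp := tau_pos.
elim: r v h => [|r IH] v h hv hh.
  exists 0%N; split => //.
  have hge := Vi_ge hv.
  have h0 : 0 <= v + muk by lra.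
  by rewrite addr_ge0 // mulr_ge0 // divr_ge0 // ltW.
have hv0 := hv.
case: hv => v' [hv' [e [j [hej hw]]]].
have hv'V : inV l n a v' by exists r.
have [h' hh'] := isH_ex hl0 hd0 (V_grid hv'V).
have [m [hm hmle]] := IH _ _ hv' hh'.
have hvw : v' <= v by rewrite hw; exact: Tm_ge.
case: (eqVneq v v') => [E|hne].
  rewrite E in hh *; have := isH_uniq hh hh' => ->; by exists m.
have hlt : v' < v by rewrite lt_neqAle eq_sym hne hvw.
have hlt' : v' < Tm l n a e j v' by rewrite -[Tm _ _ _ _ _ _]/(piL _ _ _ _) -hw.
have hh2 : isH d l (Tm l n a e j v') h by rewrite -[Tm _ _ _ _ _ _]/(piL _ _ _ _) -hw.
have := step hv'V hej hlt' hh' hh2.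
rewrite -[Tm _ _ _ _ _ _]/(piL _ _ _ _) -hw => hst.
exists m.+1; split.
  by exists v'; split => //; exists e, j.
rewrite -natr1; lra.
Qed.

Lemma main_aux v :
    inV l n a v <->
    [/\ inZdl d l v, - muk <= v &
        exists h k : nat, [/\ isH d l v h,
          Num.floor (n.+1%:R * ((v + muk) / tau) + h%:R) = k%:Z &
          inVi l n a k v]].
Proof.
split; last by case=> _ _ [h [k [_ _ hk]]]; exists k.
move=> hV; have hZ := V_grid hV; have hge := V_ge hV.
have [h hh] := isH_ex hl0 hd0 hZ.
case: (hV) => r hr.
have [m [hm hmle]] := chain hr hh.
set P := n.+1%:R * ((v + muk) / tau) + h%:R in hmle *.
have hP0 : 0 <= P.
  have htp := tau_pos.
  have h0 : 0 <= v + muk by lra.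
  by rewrite addr_ge0 // mulr_ge0 // divr_ge0 // ltW.
have hf0 : 0 <= Num.floor P by rewrite floor_ge0.
split => //; exists h, `|Num.floor P|%N; split => //.
  by rewrite gez0_abs.
apply: (inVi_mono hl ha0 _ hm).
have hm' : (m%:Z <= Num.floor P) by rewrite floor_ge_int.
by rewrite -lez_nat gez0_abs.
Qed.
End Main.

Theorem mainTheorem11 (K : fieldType) (l n : nat) (a : nat -> {poly K}) (d : nat) :
  (2 <= l)%N -> (1 <= n)%N -> a 0%N != 0 -> a n != 0 -> (1 <= d)%N ->
  (forall mu : rat, isSlope l n a mu -> (denq mu %| d%:Z)%Z) ->
  forall muk : rat, isMaxSlope l n a muk ->
  forall tau : rat, isTau l n a d tau ->
  forall v : rat,
    inV l n a v <->
    [/\ inZdl d l v, - muk <= v &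
        exists h k : nat, [/\ isH d l v h,
          Num.floor (n.+1%:R * ((v + muk) / tau) + h%:R) = k%:Z &
          inVi l n a k v]].
Proof.
move=> hl hn ha0 han hd hden muk hmuk tau htau v.
exact: (main_aux hl hn ha0 han hd hden hmuk htau v).
Qed.
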